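(* Assume $\mathcal A$ is convex and closed, $\mathcal P$ is convex and closed, $V_0$ is convex and lower semicontinuous, and $V_1$ is superlinear. Then $\mathcal N:=\mathcal L\cap(-\mathcal L)$ is a linear subspace of $\mathbb R^N$, and for every $(X,m)\in\mathcal C$ there exists $x\in\mathcal P\cap\mathcal N^\perp$ with $V_0(x)\le m$ and $X+V_1(x)\in\mathcal A$, where $\mathcal N^\perp$ is the orthogonal complement of $\mathcal N$ in $\operatorname{span}(\mathcal P)$.
   Context: Standing setup: Let $\mathcal{X}$ be a real topological vector space partially ordered by a convex cone $\mathcal{X}_+\subset\mathcal X$; write $X\ge Y$ iff $X-Y\in\mathcal X_+$. Fix $N\in\mathbb N$ and: a set $\mathcal P\subset\mathbb R^N$ with $0\in\mathcal P$; a function $V_0:\mathbb R^N\to\mathbb R$ with $V_0(0)=0$ and $V_0(x)\ge -V_0(-x)$ for all $x\in\mathbb R^N$; a map $V_1:\mathbb R^N\to\mathcal X$ with $V_1(0)=0$ and $V_1(x)\le -V_1(-x)$ for all $x\in\mathbb R^N$; a set $\mathcal A\subset\mathcal X$ with $0\in\mathcal A$ and $\mathcal A+\mathcal X_+\subset\mathcal A$. $V_1$ is superlinear if it is concave ($V_1(\lambda x+(1-\lambda)y)\ge\lambda V_1(x)+(1-\lambda)V_1(y)$, $\lambda\in[0,1]$) and positively homogeneous ($V_1(\lambda x)=\lambda V_1(x)$, $\lambda\ge0$). Asymptotic notions: for a nonempty set $C$ in a topological vector space, $C^\infty=\{X:\exists\text{ nets }(X_\alpha)\subset C,\ (\lambda_\alpha)\subset[0,\infty),\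 \lambda_\alpha\to0,\ \lambda_\alpha X_\alpha\to X\}$. For $f:\mathbb R^N\to\mathbb R$, its asymptotic function $f^\infty:\mathbb R^N\to[-\infty,\infty]$ is the function whose epigraph $\{(x,m)\in\mathbb R^N\times\mathbb R: f^\infty(x)\le m\}$ equals $(\operatorname{epi}f)^\infty$, where $\operatorname{epi}f=\{(x,m)\in\mathbb R^N\times\mathbb R: f(x)\le m\}$. $\mathcal L=\{x\in\mathcal P^\infty: V_0^\infty(x)\le0,\ V_1(x)\in\mathcal A^\infty\}$, and $\mathcal C=\{(X,m)\in\mathcal X\times\mathbb R:\exists x\in\mathcal P \text{ with } V_0(x)\le m,\ X+V_1(x)\in\mathcal A\}$. *)

(* Defs.v *)
From HB Require Import structures.
From mathcomp Require Import all_boot all_order all_algebra.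
From mathcomp Require Import all_classical all_reals all_analysis.
Set Implicit Arguments. Unset Strict Implicit. Unset Printing Implicit Defensive.
Import Order.TTheory GRing.Theory Num.Theory.
Local Open Scope classical_set_scope.
Local Open Scope ring_scope.

Import numFieldNormedType.Exports.

Section Defs.
Variable R : realType.

Definition directed_set (I : Type) (le : I -> I -> Prop) : Prop :=
  inhabited I /\ (forall i, le i i) /\
  (forall i j k, le i j -> le j k -> le i k) /\
  (forall i j, exists k, le i k /\ le j k).

Definition net_cvg (T : topologicalType) (I : Type) (le : I -> I -> Prop)
  (f : I -> T) (x : T) : Prop :=
  forall U, nbhs x U -> exists i0, forall i, le i0 i -> U (f i).

Definition asym_cone (E : topologicalLmodType R) (C : set E) : set E :=
  [set X | exists (I : Type) (le : I -> I -> Prop) (Xa : I -> E) (la : I -> R),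
     [/\ directed_set le, (forall i, C (Xa i)), (forall i, 0 <= la i),
         @net_cvg R^o _ le la 0 & @net_cvg E _ le (fun i => la i *: Xa i) X]].

Definition epi (N : nat) (f : 'rV[R]_N -> R) : set ('rV[R]_N * R^o)%type :=
  [set p | f p.1 <= p.2].

(* asymptotic function f^oo : R^N -> [-oo, +oo]: the function whose epigraph
   is (epi f)^oo, i.e. f^oo x = inf {m | (x, m) in (epi f)^oo} *)
Definition asym_fun (N : nat) (f : 'rV[R]_N -> R) (x : 'rV[R]_N) : \bar R :=
  ereal_inf [set (m%:E)%E | m in [set m : R | asym_cone (epi f) (x, m)]].

Definition convex_cone (E : lmodType R) (K : set E) : Prop :=
  K 0 /\ (forall x y, K x -> K y -> K (x + y)) /\
  (forall (l : R) x, 0 <= l -> K x -> K (l *: x)).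

Definition cle (E : lmodType R) (K : set E) (X Y : E) : Prop := K (Y - X).

Definition convex_set_ (E : lmodType R) (C : set E) : Prop :=
  forall x y (l : R), C x -> C y -> 0 <= l <= 1 -> C (l *: x + (1 - l) *: y).

Definition convex_fun_ (N : nat) (f : 'rV[R]_N -> R) : Prop :=
  forall x y (l : R), 0 <= l <= 1 ->
    f (l *: x + (1 - l) *: y) <= l * f x + (1 - l) * f y.

Definition lsc (N : nat) (f : 'rV[R]_N -> R) : Prop :=
  lower_semicontinuous (fun x : 'rV[R]_N => (f x)%:E).

Definition superlinear (E : lmodType R) (K : set E) (N : nat)
  (V : 'rV[R]_N -> E) : Prop :=
  (forall x y (l : R), 0 <= l <= 1 ->
     cle K (l *: V x + (1 - l) *: V y) (V (l *: x + (1 - l) *: y))) /\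
  (forall (l : R) x, 0 <= l -> V (l *: x) = l *: V x).

Definition is_subspace (N : nat) (S : set 'rV[R]_N) : Prop :=
  S 0 /\ forall (a : R) x y, S x -> S y -> S (a *: x + y).

Definition dotv (N : nat) (x y : 'rV[R]_N) : R := (x *m y^T) 0 0.

Definition span (N : nat) (S : set 'rV[R]_N) : set 'rV[R]_N :=
  [set y | exists (n : nat) (c : 'I_n -> R) (p : 'I_n -> 'rV[R]_N),
     (forall i, S (p i)) /\ y = \sum_(i < n) c i *: p i].

Definition orth_in_span (N : nat) (P M : set 'rV[R]_N) : set 'rV[R]_N :=
  [set y | span P y /\ forall z, M z -> dotv y z = 0].

Definition Lset (E : topologicalLmodType R) (N : nat) (P : set 'rV[R]_N)
  (V0 : 'rV[R]_N -> R) (V1 : 'rV[R]_N -> E) (A : set E) : set 'rV[R]_N :=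
  [set x | [/\ asym_cone P x, (asym_fun V0 x <= 0)%E & asym_cone A (V1 x)]].

Definition Nset (E : topologicalLmodType R) (N : nat) (P : set 'rV[R]_N)
  (V0 : 'rV[R]_N -> R) (V1 : 'rV[R]_N -> E) (A : set E) : set 'rV[R]_N :=
  Lset P V0 V1 A `&` [set x | Lset P V0 V1 A (- x)].

Definition Cset (E : topologicalLmodType R) (N : nat) (P : set 'rV[R]_N)
  (V0 : 'rV[R]_N -> R) (V1 : 'rV[R]_N -> E) (A : set E) : set (E * R)%type :=
  [set p | exists x, [/\ P x, V0 x <= p.2 & A (p.1 + V1 x)]].

End Defs.

(* Main.v *)
Require Import Defs.
From HB Require Import structures.
From mathcomp Require Import all_boot all_order all_algebra.
From mathcomp Require Import all_classical all_reals all_analysis.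
From mathcomp Require Import ring lra.
Import Order.TTheory GRing.Theory Num.Theory.
Import numFieldNormedType.Exports.
Local Open Scope classical_set_scope.
Local Open Scope ring_scope.
Set Implicit Arguments. Unset Strict Implicit.

Section LinAlg.
Variable R : realType.

Lemma mxtmul0 p q (B : 'M[R]_(p, q)) : B^T *m B = 0 -> B = 0.
Proof.
move=> h; apply/matrixP => i j; rewrite mxE.
have := congr1 (fun A : 'M[R]_(q) => A j j) h; rewrite !mxE => hs.
have h0 : forall k, true -> 0 <= B^T j k * B k j.
  by move=> k _; rewrite mxE -expr2 sqr_ge0.
have := psumr_eq0P h0 hs (i := i) isT.
by rewrite mxE -expr2 => /eqP; rewrite sqrf_eq0 => /eqP.
Qed.

Variable n : nat.
Variable S : set 'rV[R]_n.
Hypothesis hS : is_subspace S.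

Lemma sub_add x y : S x -> S y -> S (x + y).
Proof. by move=> Sx Sy; have := hS.2 1 x y Sx Sy; rewrite scale1r. Qed.

Lemma sub_scale a x : S x -> S (a *: x).
Proof. by move=> Sx; have := hS.2 a x 0 Sx hS.1; rewrite addr0. Qed.

Lemma sub_sum (I : finType) (F : I -> 'rV[R]_n) :
  (forall i, S (F i)) -> S (\sum_i F i).
Proof.
move=> hF; apply: (big_ind S) => //; [exact: hS.1|exact: sub_add].
Qed.

Definition rows_in k (M : 'M[R]_(k, n)) := forall i, S (row i M).
Arguments rows_in {k}.

Lemma sub_mul k (u : 'rV[R]_k) (M : 'M[R]_(k, n)) : rows_in M -> S (u *m M).
Proof.
by move=> hM; rewrite mulmx_sum_row; apply: sub_sum => i; apply: sub_scale.
Qed.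

Lemma rows_in_mul k1 k2 (D : 'M[R]_(k1, k2)) (B : 'M[R]_(k2, n)) :
  rows_in B -> rows_in (D *m B).
Proof. by move=> hB i; rewrite row_mul; apply: sub_mul. Qed.

Lemma rows_in_col k1 k2 (A : 'M[R]_(k1, n)) (B : 'M[R]_(k2, n)) k3
  (C : 'M[R]_(k3, n)) :
  rows_in A -> rows_in B -> (C <= col_mx A B)%MS -> rows_in C.
Proof.
move=> hA hB /submxP [D ->].
rewrite -[D]hsubmxK mul_row_col => i; rewrite (raddfD (row i)).
by apply: sub_add; apply: rows_in_mul.
Qed.

Lemma rows_in_rV (z : 'rV[R]_n) : S z -> rows_in z.
Proof.
move=> Sz i; rewrite (ord1 i).
have -> : row 0 z = z by apply/rowP => j; rewrite mxE.
done.
Qed.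

Lemma spanning : exists M : 'M[R]_n, rows_in M /\ forall z, S z -> (z <= M)%MS.
Proof.
apply: contrapT => H.
have H' : forall M : 'M[R]_n, rows_in M -> exists z, S z /\ ~~ (z <= M)%MS.
  move=> M hM; apply: contrapT => H2; apply: H; exists M; split => // z Sz.
  apply: contrapT => nz; apply: H2; exists z; split => //; exact/negP.
have hk : forall k, exists M : 'M[R]_n, rows_in M /\ (k <= \rank M)%N.
  elim=> [|k [M [hM hk]]].
    by exists 0; split => // i; rewrite row0; exact: hS.1.
  have [z [Sz nz]] := H' M hM.
  exists <<col_mx M z>>%MS; split.
    apply: (rows_in_col hM (rows_in_rV Sz)).
    by rewrite genmxE.
  rewrite genmxE; apply: leq_ltn_trans hk _; apply: rank_ltmx.
  rewrite ltmxE; apply/andP; split; first by rewrite -addsmxE addsmxSl.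
  apply/negP => hc; move/negP: nz; apply.
  by apply: submx_trans hc; rewrite -addsmxE addsmxSr.
have [M [_ hM]] := hk n.+1.
by have := rank_leq_col M; rewrite leqNgt hM.
Qed.

Lemma projection (x : 'rV[R]_n) :
  exists n0, S n0 /\ forall z, S z -> dotv (x - n0) z = 0.
Proof.
have [M [hM hsp]] := spanning.
pose G := M *m M^T.
have key : (x *m M^T <= G)%MS.
  rewrite submxE.
  have h1 : M^T *m cokermx G = 0.
    apply: mxtmul0.
    have hG : G *m cokermx G = 0 := mulmx_coker G.
    have -> : (M^T *m cokermx G)^T *m (M^T *m cokermx G) = (cokermx G)^T *m (G *m cokermx G) by rewrite trmx_mul trmxK !mulmxA.
    by rewrite hG mulmx0.
  by rewrite -mulmxA h1 mulmx0.
have [u hu] := submxP key.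
exists (u *m M); split; first exact: sub_mul.
move=> z /hsp /submxP [w ->]; rewrite /dotv trmx_mul mulmxA mulmxBl hu.
by rewrite -mulmxA subrr mul0mx mxE.
Qed.

End LinAlg.

Section Top.
Variable R : realType.

Definition netF (I : Type) (le : I -> I -> Prop) : set_system I :=
  [set U | exists i0, forall i, le i0 i -> U i].

Lemma netF_proper I (le : I -> I -> Prop) : directed_set le -> ProperFilter (netF le).
Proof.
move=> [[i0] [refl [trans dir]]]; constructor.
- by move=> [j hj]; exact: (hj j (refl j)).
- constructor.
  + by exists i0.
  + move=> A B [a ha] [b hb]; have [k [ak bk]] := dir a b.
    by exists k => i ki; split; [apply: ha | apply: hb]; exact: trans ki.
  + by move=> A B AB [a ha]; exists a => i /ha; exact: AB.
Qed.

Lemma net_cvgP (T : topologicalType) I (le : I -> I -> Prop) (f : I -> T) x :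
  net_cvg le f x <-> f @ netF le --> x.
Proof. by split => H U hU; apply: H. Qed.

Lemma net_cvg_nat (T : topologicalType) (f : nat -> T) x :
  f @ \oo --> x -> net_cvg leq f x.
Proof.
move=> h U /h [N _ hN]; exists N => i hi; exact: hN.
Qed.

Lemma tcvgD (E : topologicalLmodType R) T (F : set_system T) (FF : Filter F)
  (f g : T -> E) (a b : E) :
  f @ F --> a -> g @ F --> b -> (fun t => f t + g t) @ F --> a + b.
Proof.
move=> hf hg.
exact: (@continuous2_cvg _ _ _ _ _ FF f g (fun x y => x + y) a b (@add_continuous E (a, b)) hf hg).
Qed.

Lemma tcvgZ (E : topologicalLmodType R) T (F : set_system T) (FF : Filter F)
  (s : T -> R^o) (f : T -> E) (k : R^o) (a : E) :
  s @ F --> k -> f @ F --> a -> (fun t => s t *: f t) @ F --> k *: a.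
Proof.
move=> hs hf.
exact: (@continuous2_cvg _ _ _ _ _ FF s f (fun x y => x *: y) k a (@scale_continuous R E (k, a)) hs hf).
Qed.
Arguments tcvgZ {E T F} FF {s f k a}.
Arguments tcvgD {E T F} FF {f g a b}.


Lemma asym_add (E : topologicalLmodType R) (C : set E) (c d : E) :
  convex_set_ C -> closed C -> C c -> asym_cone C d -> C (c + d).
Proof.
move=> cvx cl Cc [I [le [X [la [dir CX la0 hla hX]]]]].
have PF := netF_proper dir.
have FF : Filter (netF le) := @filter_filter _ _ PF.
move/net_cvgP: hla => hla; move/net_cvgP: hX => hX.
have h1m : (fun i => 1 - la i : R^o) @ netF le --> (1 - 0 : R^o).
  by apply: cvgB => //; exact: cvg_cst.
have h1 := tcvgD FF (tcvgZ FF h1m (cvg_cst c)) hX.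
rewrite subr0 scale1r in h1.
have hn : \forall i \near netF le, C ((1 - la i) *: c + la i *: X i).
  have hl := @cvgr_lt R I (netF le) (@filter_filter _ _ PF) la 0 hla 1 ltr01.
  apply: filterS hl => i /= hi.
  rewrite addrC; apply: cvx => //; rewrite la0 /=; exact: ltW.
exact: (@closed_cvg _ _ _ PF _ C cl hn _ (h1 FF)).
Qed.

Lemma asym_ray (E : topologicalLmodType R) (C : set E) (c d : E) :
  (forall t : R, 0 <= t -> C (c + t *: d)) -> asym_cone C d.
Proof.
move=> hC.
exists nat, leq, (fun k => c + k%:R *: d), (fun k => (k.+1%:R)^-1 : R); split.
- split; first by constructor; exact: 0%N.
  split; first exact: leqnn.
  split; first by move=> i j k; exact: leq_trans.
  by move=> i j; exists (maxn i j); rewrite leq_maxl leq_maxr.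
- by move=> k; apply: hC; exact: ler0n.
- by move=> k; rewrite invr_ge0 ler0n.
- apply: net_cvg_nat; exact: (@cvg_harmonic R).
- apply: net_cvg_nat.
  have hh : (fun k : nat => (k.+1%:R)^-1 : R^o) @ \oo --> (0 : R^o).
    exact: (@cvg_harmonic R).
  have h1m : (fun k : nat => 1 - (k.+1%:R)^-1 : R^o) @ \oo --> (1 - 0 : R^o).
    by apply: cvgB => //; exact: cvg_cst.
  have FF : Filter (\oo : set_system nat) := eventually_filter.
  have := tcvgD FF (tcvgZ FF hh (cvg_cst c)) (tcvgZ FF h1m (cvg_cst d)).
  rewrite scale0r add0r subr0 scale1r.
  have -> : (fun t : nat => (t.+1%:R)^-1 *: c + (1 - (t.+1%:R)^-1) *: d)
      = (fun k : nat => (k.+1%:R)^-1 *: (c + k%:R *: d)).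
    apply: funext => k; rewrite scalerDr scalerA; congr (_ + _ *: d).
    have hk : (k%:R + 1 : R) != 0 by rewrite natr1 pnatr_eq0.
    rewrite -natr1; field; exact: hk.
  by move=> h; exact: (h FF FF).
Qed.

Lemma asym_scale (E : topologicalLmodType R) (C : set E) (d : E) (a : R) :
  0 <= a -> asym_cone C d -> asym_cone C (a *: d).
Proof.
move=> a0 [I [le [X [la [dir CX la0 hla hX]]]]].
have PF := netF_proper dir.
have FF : Filter (netF le) := @filter_filter _ _ PF.
exists I, le, X, (fun i => a * la i); split => //.
- by move=> i; rewrite mulr_ge0.
- apply/net_cvgP; move/net_cvgP: hla => hla.
  have := tcvgZ FF (@cvg_cst _ (a : R^o) _ _ FF) hla; rewrite scaler0; exact.
- apply/net_cvgP; move/net_cvgP: hX => hX.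
  have := tcvgZ FF (@cvg_cst _ (a : R^o) _ _ FF) hX.
  have -> : (fun t => a *: (la t *: X t)) = (fun i => (a * la i) *: X i).
    by apply: funext => i; rewrite scalerA.
  done.
Qed.

Lemma asym_zero (E : topologicalLmodType R) (C : set E) :
  C 0 -> asym_cone C 0.
Proof.
move=> C0; exists unit, (fun _ _ => True), (fun _ => 0), (fun _ => 0 : R); split.
- split; first by constructor; exact: tt.
  split; first by [].
  split; first by [].
  by move=> i j; exists tt.
- by [].
- by [].
- by move=> U hU; exists tt => i _; exact: nbhs_singleton.
- by move=> U hU; exists tt => i _; rewrite scale0r; exact: nbhs_singleton.
Qed.

Lemma asym_addc (E : topologicalLmodType R) (C : set E) (x y : E) :
  convex_set_ C -> closed C -> C 0 -> asym_cone C x -> asym_cone C y ->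
  asym_cone C (x + y).
Proof.
move=> cvx cl C0 hx hy; apply: (@asym_ray _ _ 0) => t t0.
rewrite add0r scalerDr; apply: asym_add => //; last exact: asym_scale.
by rewrite -[t *: x]add0r; apply: asym_add => //; exact: asym_scale.
Qed.

End Top.

Section Epi.
Variable R : realType.

Lemma epi_convex N (f : 'rV[R]_N -> R) : convex_fun_ f -> convex_set_ (epi f).
Proof.
move=> cf [x m] [y m'] l /= hx hy /andP[l0 l1].
rewrite /epi /=.
apply: (le_trans (cf x y l _)); first by rewrite l0 l1.
by apply: lerD; apply: ler_wpM2l => //; rewrite subr_ge0.
Qed.

Lemma epi_closed N (f : 'rV[R]_N -> R) : lsc f -> closed (epi f).
Proof.
move=> hf; rewrite -[epi f]setCK; apply: open_closedC.
rewrite openE => -[x m] /= hxm.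
have lt : m < f x by rewrite ltNge; apply/negP.
pose a := (m + f x) / 2.
have [V hV hVa] := hf x a (ltac:(rewrite lte_fin /a; lra)).
exists (V, [set r | r < a]) => /=.
  split => //; apply: lt_nbhsl; rewrite /a; lra.
move=> [y r] /= [Vy ra]; rewrite /epi /= => hle.
have := hVa y Vy; rewrite lte_fin => h; lra.
Qed.

Lemma asym_fun_le0E N (f : 'rV[R]_N -> R) x : (asym_fun f x <= 0)%E ->
  forall e : R, 0 < e -> exists m, m < e /\ asym_cone (epi f) (x, m).
Proof.
move=> h e e0.
have : (asym_fun f x < e%:E)%E by apply: le_lt_trans h _; rewrite lte_fin.
by move/ereal_inf_lt => [_ [m hm <-]]; rewrite lte_fin => me; exists m.
Qed.

Lemma asym_fun_le0I N (f : 'rV[R]_N -> R) x :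
  (forall e : R, 0 < e -> exists m, m <= e /\ asym_cone (epi f) (x, m)) ->
  (asym_fun f x <= 0)%E.
Proof.
move=> h; apply/lee_addgt0Pr => e e0; rewrite add0e.
have [m [me hm]] := h e e0.
apply: ge_ereal_inf; exists m%:E; first by exists m.
by rewrite lee_fin.
Qed.

End Epi.


Unset Implicit Arguments. Set Strict Implicit.

Theorem mainTheorem13 (R : realType) (E : topologicalLmodType R)
  (Xplus : set E) (N : nat) (P : set 'rV[R]_N)
  (V0 : 'rV[R]_N -> R) (V1 : 'rV[R]_N -> E) (A : set E) :
  (* standing setup *)
  convex_cone Xplus ->
  P 0 ->
  V0 0 = 0 -> (forall x, - V0 (- x) <= V0 x) ->
  V1 0 = 0 -> (forall x, cle Xplus (V1 x) (- V1 (- x))) ->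
  A 0 -> (forall a k, A a -> Xplus k -> A (a + k)) ->
  (* hypotheses of the theorem *)
  convex_set_ A -> closed A ->
  convex_set_ P -> closed P ->
  convex_fun_ V0 -> lsc V0 ->
  superlinear Xplus V1 ->
  is_subspace (Nset P V0 V1 A) /\
  (forall (X : E) (m : R), Cset P V0 V1 A (X, m) ->
     exists x, [/\ P x, orth_in_span P (Nset P V0 V1 A) x,
                   V0 x <= m & A (X + V1 x)]).
Proof.
move=> Xc P0 V00 _ V10 _ A0 AX cvxA clA cvxP clP cvxV0 lscV0 [sconc shom].
have cvxE := epi_convex cvxV0.
have clE := epi_closed lscV0.
have E0 : epi V0 0 by rewrite /epi /= V00.
have [Xc0 [XcD XcZ]] := Xc.
have superadd : forall x y, Xplus (V1 (x + y) - (V1 x + V1 y)).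
  move=> x y.
  have h := sconc x y (2^-1) (ltac:(apply/andP; split; [rewrite invr_ge0 ler0n | rewrite invf_le1 ?ler1n ?ltr0n //])).
  have h2 : 1 - 2^-1 = 2^-1 :> R by field.
  rewrite /cle h2 -scalerDr shom ?invr_ge0 ?ler0n // -scalerDr -scalerBr in h.
  have := XcZ 2 _ (ler0n _ 2) (h isT).
  by rewrite scalerA mulfV ?pnatr_eq0 // scale1r.
pose L := Lset P V0 V1 A.
have AinfX : forall a k, asym_cone A a -> Xplus k -> asym_cone A (a + k).
  move=> a k ha hk; apply: (@asym_ray _ _ _ 0) => t t0.
  rewrite add0r scalerDr; apply: AX; last exact: XcZ.
  by rewrite -[t *: a]add0r; apply: asym_add => //; exact: asym_scale.
have L0 : L 0.
  split.
  - exact: asym_zero.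
  - apply: asym_fun_le0I => e e0; exists 0; split; first exact: ltW.
    exact (asym_zero E0).
  - by rewrite V10; exact: asym_zero.
have LZ : forall a x, 0 <= a -> L x -> L (a *: x).
  move=> a x a0 [hP hV hA]; split.
  - exact: asym_scale.
  - case: (eqVneq a 0) => [->|an0]; first by rewrite scale0r; case: L0.
    have ap : 0 < a by rewrite lt0r an0 a0.
    apply: asym_fun_le0I => e e0.
    have [m [me hm]] := asym_fun_le0E hV (divr_gt0 e0 ap).
    exists (a * m); split.
      have : a * m <= a * (e / a) by rewrite ler_wpM2l // ltW.
      by rewrite [a * (e / a)]mulrC divfK.
    exact: (asym_scale (C := epi V0) a0 hm).
  - by rewrite shom //; exact: asym_scale.
have LD : forall x y, L x -> L y -> L (x + y).
  move=> x y [px vx ax] [py vy ay]; split.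
  - exact: asym_addc.
  - apply: asym_fun_le0I => e e0.
    have e2 : 0 < e / 2 by rewrite divr_gt0.
    have [m1 [m1e hm1]] := asym_fun_le0E vx e2.
    have [m2 [m2e hm2]] := asym_fun_le0E vy e2.
    exists (m1 + m2); split; first by lra.
    exact: (asym_addc (C := epi V0) cvxE clE E0 hm1 hm2).
  - have hk := superadd x y.
    have -> : V1 (x + y) = (V1 x + V1 y) + (V1 (x + y) - (V1 x + V1 y)).
      by rewrite [RHS]addrC subrK.
    by apply: AinfX => //; exact: asym_addc.
have NZ : forall a z, L z /\ L (- z) -> L (a *: z) /\ L (- (a *: z)).
  move=> a z [hz hnz]; case: (leP 0 a) => ha.
    by split; [exact: LZ | rewrite -scalerN; exact: LZ].
  have ha' : 0 <= - a by rewrite oppr_ge0 ltW.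
  split.
    by have := LZ _ _ ha' hnz; rewrite scalerN scaleNr opprK.
  by have := LZ _ _ ha' hz; rewrite scaleNr.
have part1 : is_subspace (Nset P V0 V1 A).
  split.
    by split => //=; rewrite oppr0.
  move=> a x y [hx hnx] [hy hny].
  have [h1 h2] := NZ a x (conj hx hnx).
  split; first exact: LD.
  by rewrite /= opprD; exact: LD.
split => //.
move=> X m [x [Px Vx Ax]] /=.
have [n0 [Nn0 horth]] := projection part1 x.
have [_ [hP hV hA]] := Nn0.
exists (x - n0); split.
- exact: asym_add.
- split; last exact: horth.
  exists 1%N, (fun _ => 1), (fun _ => x - n0); split.
  + by move=> _; exact: asym_add.
  + by rewrite big_ord1 scale1r.
- apply: le_trans Vx.
  apply/ler_addgt0Pr => e e0.
  have [m' [m'e hm']] := asym_fun_le0E hV e0.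
  have := asym_add cvxE clE (c := (x, V0 x)) (ltac:(by rewrite /epi /=)) hm'.
  rewrite /epi /= => h; apply: le_trans h _.
  by rewrite lerD2l ltW.
- have hk := superadd x (- n0).
  have -> : V1 (x - n0) = (V1 x + V1 (- n0)) + (V1 (x - n0) - (V1 x + V1 (- n0))).
    by rewrite [RHS]addrC subrK.
  have := AX _ _ (asym_add cvxA clA Ax hA) hk.
  by rewrite -!addrA.
Qed.
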